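(* Let $G$ be a connected graph and let $v\in V(G)$ be a cut-vertex such that $G-v$ has exactly two connected components $G_1$ and $G_2$. If $G[V(G_i)\cup\{v\}]$ is isomorphic to a path for $i=1$ or for $i=2$, then $v$ is not a basis forced vertex of $G$.
   Context: All graphs are finite and simple. For vertices $u,v$ of a connected graph $G$, $d(u,v)$ is the length of a shortest $u$–$v$ path. A set $R\subseteq V(G)$ is a resolving set if for all distinct $x,y\in V(G)$ there is $r\in R$ with $d(r,x)\neq d(r,y)$. The metric dimension $\dim(G)$ is the minimum cardinality of a resolving set, and a resolving set of cardinality $\dim(G)$ is a metric basis. A vertex is a basis forced vertex if it belongs to every metric basis of $G$. A cut-vertex is a vertex $v$ such that $G-v$ is disconnected; $G[S]$ denotes the subgraph induced by $S$. *)

(* Defs.v *)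
(* A finite simple graph is a symmetric irreflexive
   relation e : rel T on a finite type T of vertices. *)
From mathcomp Require Import all_boot.
Set Implicit Arguments. Unset Strict Implicit. Unset Printing Implicit Defensive.

Section Graph.
Variables (T : finType) (e : rel T).

Definition connected_graph : Prop := forall x y : T, connect e x y.

Definition nball (x : T) (k : nat) : {set T} :=
  iter k (fun S => S :|: [set y | [exists z in S, e z y]]) [set x].

(* d(x,y): the least k with y reachable from x in at most k steps, i.e.
   the length of a shortest x--y path (for connected graphs, k < #|T|). *)
Definition dist (x y : T) : nat :=
  find (fun k => y \in nball x k) (iota 0 #|T|).

Definition resolving (R : {set T}) : bool :=
  [forall x, forall y, (x != y) ==> [exists r in R, dist r x != dist r y]].

(* metric dimension: minimum cardinality of a resolving set
   (setT is always resolving since d(x,x) = 0 <> d(x,y) for x <> y) *)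
Definition metric_dim : nat :=
  #|[arg min_(R < [set: T] | resolving R) #|R|]|.

Definition metric_basis (R : {set T}) : bool :=
  resolving R && (#|R| == metric_dim).

Definition basis_forced (v : T) : Prop :=
  forall R : {set T}, metric_basis R -> v \in R.

Definition del_rel (v : T) : rel T := [rel x y | [&& e x y, x != v & y != v]].

Definition component_del (v : T) (C : {set T}) : Prop :=
  exists x, x != v /\ C = [set y | (y != v) && connect (del_rel v) x y].

Definition two_components (v : T) (V1 V2 : {set T}) : Prop :=
  [/\ component_del v V1, component_del v V2, V1 != V2 &
      forall C, component_del v C -> C = V1 \/ C = V2].

(* the induced subgraph G[S] is isomorphic to a path: S can be listed
   without repetition as s so that two vertices of S are adjacent iff they
   are consecutive in s *)
Definition induced_path (S : {set T}) : Prop :=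
  exists s : seq T, [/\ uniq s, [set x in s] = S &
    forall x y, x \in s -> y \in s ->
      e x y = ((index x s).+1 == index y s) || ((index y s).+1 == index x s)].

End Graph.

(* Main.v *)
Require Import Defs.
From mathcomp Require Import all_boot zify.
Set Implicit Arguments. Unset Strict Implicit. Unset Printing Implicit Defensive.


Section Dist.
Variables (T : finType) (e : rel T).
Hypothesis e_sym : symmetric e.
Hypothesis Gconn : connected_graph e.

Lemma nball0 x y : (y \in nball e x 0) = (y == x).
Proof. by rewrite /nball /= inE. Qed.

Lemma nballS x k y : (y \in nball e x k.+1) =
  (y \in nball e x k) || [exists z in nball e x k, e z y].
Proof. by rewrite /nball iterS !inE. Qed.

Lemma nball_mono x y j k : j <= k -> y \in nball e x j -> y \in nball e x k.
Proof.
elim: k => [|k IH]; first by rewrite leqn0 => /eqP->.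
rewrite leq_eqVlt => /orP[/eqP-> //| ]; rewrite ltnS => /IH H /H.
by rewrite nballS => ->.
Qed.

Lemma path_nball x p : path e x p -> last x p \in nball e x (size p).
Proof.
elim/last_ind: p => [|p z IH]; first by rewrite /= nball0.
rewrite rcons_path last_rcons size_rcons => /andP[/IH H ez].
rewrite nballS; apply/orP; right; apply/existsP; exists (last x p).
by rewrite H.
Qed.

Lemma nball_all x y : y \in nball e x #|T|.-1.
Proof.
have /connectP[p pp ->] := Gconn x y.
case: (shortenP pp) => p' pp' up' _.
apply: (nball_mono _ (path_nball pp')).
have := card_uniqP up'; rewrite /= => Hc.
have : #|x :: p'| <= #|T| := max_card _.
by rewrite Hc /=; case: #|T|.
Qed.

Lemma distP x y k : (y \in nball e x k) = (dist e x y <= k).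
Proof.
have Tpos : 0 < #|T|.
  by have : #|[set x]| <= #|T| := max_card _; rewrite cards1.
set P := (fun k => y \in nball e x k).
have hasP : has P (iota 0 #|T|).
  apply/hasP; exists #|T|.-1; last exact: nball_all.
  rewrite mem_iota; lia.
have dlt : dist e x y < #|T| by move: hasP; rewrite has_find size_iota.
have Pd : P (dist e x y).
  by have := nth_find 0 hasP; rewrite nth_iota -?has_find ?size_iota //.
apply/idP/idP => [Hk|Hd]; last exact: nball_mono Hd Pd.
rewrite leqNgt; apply/negP => kd.
have := before_find 0 kd; rewrite nth_iota; last by apply: ltn_trans dlt.
by rewrite /P add0n Hk.
Qed.

Lemma dist_refl x : dist e x x = 0.
Proof. by apply/eqP; rewrite -leqn0 -distP nball0. Qed.

Lemma dist0 x y : dist e x y = 0 -> x = y.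
Proof.
move=> H; have : dist e x y <= 0 by rewrite H.
by rewrite -distP nball0 => /eqP.
Qed.

Lemma dist_edge x y : e x y -> dist e x y <= 1.
Proof.
move=> exy; rewrite -distP nballS; apply/orP; right; apply/existsP; exists x.
by rewrite nball0 eqxx.
Qed.

Lemma nball_trans x y z a b :
  y \in nball e x a -> z \in nball e y b -> z \in nball e x (a + b).
Proof.
move=> Hy; elim: b z => [|b IH] z; first by rewrite nball0 addn0 => /eqP->.
rewrite addnS !nballS => /orP[/IH->//|/existsP[w /andP[/IH Hw ewz]]].
by apply/orP; right; apply/existsP; exists w; rewrite Hw.
Qed.

Lemma dist_tri x y z : dist e x z <= dist e x y + dist e y z.
Proof. by rewrite -distP; apply: (nball_trans (y := y)); rewrite distP. Qed.

Lemma nball_sym x y k : y \in nball e x k -> x \in nball e y k.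
Proof.
elim: k y => [|k IH] y; first by rewrite !nball0 => /eqP->.
rewrite nballS => /orP[/IH H|/existsP[z /andP[/IH Hz ezy]]].
  by apply: nball_mono H.
have Hyz : z \in nball e y 1 by rewrite distP; apply: dist_edge; rewrite e_sym.
by have := nball_trans Hyz Hz; rewrite add1n.
Qed.

Lemma dist_sym x y : dist e x y = dist e y x.
Proof.
by apply/eqP; rewrite eqn_leq -!distP; apply/andP; split; apply: nball_sym; rewrite distP.
Qed.

Lemma lipschitz (f : T -> nat) x y : (forall a b, e a b -> f b <= f a + 1) ->
  f y <= f x + dist e x y.
Proof.
move=> Hf; have : y \in nball e x (dist e x y) by rewrite distP.
move: (dist e x y) => k; elim: k y => [|k IH] y; first by rewrite nball0 addn0 => /eqP->.
rewrite nballS => /orP[/IH H|/existsP[z /andP[/IH Hz ezy]]]; first by lia.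
have := Hf _ _ ezy; lia.
Qed.

End Dist.


Lemma ltn_pred a b : a < b -> a <= b.-1.
Proof. lia. Qed.

Lemma predlt n : 1 < n -> n.-1 < n.
Proof. lia. Qed.

Lemma arith1 ia ib n : ia <= n -> ib <= n -> (ia.+1 == ib) || (ib.+1 == ia) ->
  n - ib <= n - ia + 1.
Proof. by move=> h1 h2 /orP[] /eqP; lia. Qed.

Lemma arith2 k d : d != 0 -> d = if k + d <= k then k - (k+d) else k + d - k.
Proof. case: ifP; lia. Qed.
Lemma arith3 i k : i <= k -> i = if k - i <= k then k - (k - i) else k - i - k.
Proof. case: ifP; lia. Qed.
Lemma arith4 n : 1 < n -> 0 <> n.-1.
Proof. lia. Qed.

Section Core.
Variables (T : finType) (e : rel T).
Hypothesis e_sym : symmetric e.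
Hypothesis Gconn : connected_graph e.
Variables (v : T) (s : seq T).
Hypothesis Hu : uniq s.
Hypothesis Hadj : forall x y, x \in s -> y \in s ->
  e x y = ((index x s).+1 == index y s) || ((index y s).+1 == index x s).
Hypothesis Hvs : v \in s.
Hypothesis Hv0 : index v s = 0.
Hypothesis Hk : 1 < size s.
Hypothesis Hout : forall a b, a \in s -> b \notin s -> e a b -> a = v.

Local Notation k := (size s).-1.
Local Notation pk := (nth v s (size s).-1).

Lemma nth0v : nth v s 0 = v.
Proof. by rewrite -{1}Hv0 nth_index. Qed.

Lemma up_path i j : i <= j -> j < size s ->
  dist e (nth v s i) (nth v s j) <= j - i.
Proof.
elim: j => [|j IH]; first by rewrite leqn0 => /eqP-> _; rewrite dist_refl.
rewrite leq_eqVlt => /orP[/eqP-> _|]; first by rewrite dist_refl.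
rewrite ltnS => ij js.
have := dist_tri Gconn (nth v s i) (nth v s j) (nth v s j.+1).
have := IH ij (ltnW js).
have : dist e (nth v s j) (nth v s j.+1) <= 1.
  apply: dist_edge => //.
  rewrite Hadj ?mem_nth ?(ltnW js) // !index_uniq ?(ltnW js) //.
  by rewrite eqxx.
lia.
Qed.

Lemma ind_lt y : y \in s -> index y s <= k.
Proof. rewrite -index_mem => H; apply: ltn_pred H. Qed.

Lemma lower1 y : (if y \in s then index y s else dist e v y) <= dist e v y.
Proof.
have := @lipschitz T e Gconn (fun y => if y \in s then index y s else dist e v y) v y.
rewrite Hvs Hv0 add0n; apply => a b eab.
case: ifP => bs; case: ifP => as_.
- by rewrite Hadj // in eab; case/orP: eab => /eqP; lia.
- have eba : e b a by rewrite e_sym.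
  by rewrite (Hout bs (negbT as_) eba) Hv0.
- by move: (eab); rewrite (Hout as_ (negbT bs) eab) => evb; rewrite Hv0 add0n (dist_edge Gconn evb).
- have := dist_tri Gconn v a b; have := dist_edge Gconn eab; lia.
Qed.

Lemma index_pk : index pk s = k.
Proof. by rewrite index_uniq // predlt. Qed.

Lemma pk_in : pk \in s.
Proof. by rewrite mem_nth // predlt. Qed.

Lemma lower2 y : (if y \in s then k - index y s else k + dist e v y) <= dist e pk y.
Proof.
have := @lipschitz T e Gconn (fun y => if y \in s then k - index y s else k + dist e v y) pk y.
rewrite pk_in index_pk subnn add0n; apply => a b eab.
case: ifP => bs; case: ifP => as_.
- have ha := ind_lt as_; have hb := ind_lt bs.
  by rewrite Hadj // in eab; exact: (arith1 ha hb eab).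
- have eba : e b a by rewrite e_sym.
  rewrite (Hout bs (negbT as_) eba) Hv0 subn0 -addnA; exact: leq_addr.
- move: (eab); rewrite (Hout as_ (negbT bs) eab) => evb.
  by rewrite Hv0 subn0 leq_add2l dist_edge.
- rewrite -addnA leq_add2l; apply: leq_trans (dist_tri Gconn v a b) _.
  by rewrite leq_add2l dist_edge.
Qed.

Lemma dist_v_in y : y \in s -> dist e v y = index y s.
Proof.
move=> ys; apply/eqP; rewrite eqn_leq; apply/andP; split.
  have := up_path (leq0n (index y s)); rewrite index_mem nth0v nth_index // subn0.
  by apply.
by have := lower1 y; rewrite ys.
Qed.

Lemma dist_pk_in y : y \in s -> dist e pk y = k - index y s.
Proof.
move=> ys; apply/eqP; rewrite eqn_leq; apply/andP; split.
  rewrite dist_sym //; have := @up_path (index y s) k (ind_lt ys).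
  rewrite nth_index //; apply; lia.
by have := lower2 y; rewrite ys.
Qed.

Lemma dist_pk_out y : y \notin s -> dist e pk y = k + dist e v y.
Proof.
move=> ys; apply/eqP; rewrite eqn_leq; apply/andP; split.
  by have := dist_tri Gconn pk v y; rewrite (dist_pk_in Hvs) Hv0 subn0.
by have := lower2 y; rewrite (negbTE ys).
Qed.

Lemma key x y : dist e pk x = dist e pk y -> dist e v x = dist e v y.
Proof.
have H z : dist e v z = if dist e pk z <= k then k - dist e pk z else dist e pk z - k.
  case: (boolP (z \in s)) => zs.
    by rewrite dist_pk_in // dist_v_in //; apply: arith3; apply: ind_lt.
  rewrite dist_pk_out //.
  have : dist e v z != 0.
    by apply/eqP => /(dist0 Gconn) zv; move: zs; rewrite -zv Hvs.
  exact: arith2.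
by move=> Hxy; rewrite H Hxy -H.
Qed.

Lemma pk_neq_v : pk != v.
Proof. by apply/negP => /eqP Hp; have := index_pk; rewrite Hp Hv0; apply: arith4 Hk. Qed.

Lemma resolvingT : resolving e [set: T].
Proof.
apply/forallP => x; apply/forallP => y; apply/implyP => xy; apply/existsP.
exists x; rewrite in_setT /= (dist_refl Gconn); apply/negP => /eqP H.
by move: xy; rewrite (dist0 Gconn (esym H)) eqxx.
Qed.

Lemma core_not_forced : ~ basis_forced e v.
Proof.
rewrite /basis_forced /metric_basis /metric_dim.
case: arg_minnP; first exact: resolvingT.
move=> R0 resR0 minR0 Hbf.
have vR0 : v \in R0 by apply: Hbf; rewrite resR0 eqxx.
set R' := pk |: (R0 :\ v).
have resR' : resolving e R'.
  apply/forallP => x; apply/forallP => y; apply/implyP => xy; apply/existsP.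
  move/forallP: resR0 => /(_ x)/forallP/(_ y)/implyP/(_ xy)/existsP[r /andP[rR dr]].
  case: (eqVneq r v) => [rv|rv].
    exists pk; rewrite /R' setU11 /=; apply/negP => /eqP Hp.
    by move: dr; rewrite rv (key Hp) eqxx.
  by exists r; rewrite /R' !inE rv rR dr orbT.
have c1 : #|R'| <= #|R0|.
  by rewrite /R' cardsU1 (cardsD1 v R0) vR0 leq_add2r leq_b1.
have c2 := minR0 _ resR'.
have : v \in R' by apply: Hbf; rewrite resR' eqn_leq c1 c2.
by rewrite /R' !inE eqxx /= eq_sym (negbTE pk_neq_v).
Qed.

End Core.


Lemma connect_inv (T : finType) (r : rel T) (P : pred T) :
  (forall y z, P y -> r y z -> P z) -> forall a b, connect r a b -> P a -> P b.
Proof.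
move=> H a b /connectP[p pp ->]; elim: p a pp => //= c p IH a /andP[rac pp] Pa.
exact: IH pp (H _ _ Pa rac).
Qed.

Lemma arith5 i n : i < n -> n - i.+1 < n.
Proof. lia. Qed.

Lemma arith6 j n : j < n -> j != n.-1 -> j.+1 < n.
Proof. lia. Qed.

Lemma arith7 j : j != 0 -> j = j.-1 -> False.
Proof. lia. Qed.

Lemma arith8 y z j : (y.+1 == z) || (z.+1 == y) -> z != j -> y < j -> z < j.
Proof. by case/orP => /eqP; lia. Qed.

Lemma arith9 j : j != 0 -> j.-1 < j.
Proof. lia. Qed.

Lemma arith10 j : j.+1 < j -> False.
Proof. lia. Qed.

Lemma index_rev' (T : finType) (s : seq T) y : uniq s -> y \in s ->
  index y (rev s) = size s - (index y s).+1.
Proof.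
move=> us ys; have lt : index y s < size s by rewrite index_mem.
move: lt; set i := index y s => lt.
have hi : size s - (size s - i.+1).+1 = i by lia.
have E : nth y (rev s) (size s - i.+1) = y.
  by rewrite nth_rev ?hi ?nth_index // arith5.
by rewrite -{1}E index_uniq ?rev_uniq ?size_rev // arith5.
Qed.

Lemma one_side (T : finType) (e : rel T) (e_sym : symmetric e)
  (Gconn : connected_graph e) (v : T) (V1 : {set T}) :
  component_del e v V1 -> induced_path e (v |: V1) -> ~ basis_forced e v.
Proof.
case=> x0 [x0v HV1] [s [us hs Hadj]].
have memS y : (y \in s) = (y == v) || (y \in V1).
  by move/setP: (hs) => /(_ y); rewrite !inE.
have memV y : (y \in V1) = (y != v) && connect (del_rel e v) x0 y.
  by rewrite HV1 inE.
have vs : v \in s by rewrite memS eqxx.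
have x0V : x0 \in V1 by rewrite memV x0v connect0.
have x0s : x0 \in s by rewrite memS x0V orbT.
have Hout a b : a \in s -> b \notin s -> e a b -> a = v.
  move=> as_ bs eab; apply/eqP; apply/negPn/negP => av.
  have aV : a \in V1 by move: as_; rewrite memS (negbTE av).
  have bv : b != v by apply: contraNneq bs => ->.
  move: bs; rewrite memS (negbTE bv) /= memV bv /=.
  move: aV; rewrite memV => /andP[_ ca].
  have dab : del_rel e v a b by rewrite /del_rel /= eab av bv.
  by rewrite (connect_trans ca (connect1 dab)).
have Hk : 1 < size s.
  move: x0s vs us; case: s {hs Hadj memS Hout} => [|a [|b t]] //=.
  by rewrite !inE => /eqP Ex /eqP Ev; move: x0v; rewrite Ex Ev eqxx.
have dsym : symmetric (del_rel e v).
  by move=> a b; rewrite /del_rel /= e_sym; case: (a != v); case: (b != v); rewrite ?andbF ?andbT.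
have Hend : (index v s == 0) || (index v s == (size s).-1).
  set j := index v s.
  have jlt : j < size s by rewrite index_mem.
  apply: contraT => /norP[j0 j1].
  set a := nth v s j.-1; set b := nth v s j.+1.
  have la : j.-1 < size s by apply: leq_ltn_trans (leq_pred j) jlt.
  have lb : j.+1 < size s by apply: arith6.
  have ia : index a s = j.-1 by rewrite index_uniq.
  have ib : index b s = j.+1 by rewrite index_uniq.
  have as_ : a \in s by rewrite mem_nth.
  have bs : b \in s by rewrite mem_nth.
  have av : a != v by apply/eqP => E; move: ia; rewrite E -/j; apply: arith7.
  have bv : b != v by apply/eqP => E; move: ib; rewrite E -/j; apply: n_Sn.
  have aV : a \in V1 by move: as_; rewrite memS (negbTE av).
  have bV : b \in V1 by move: bs; rewrite memS (negbTE bv).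
  have cab : connect (del_rel e v) a b.
    move: aV bV; rewrite !memV => /andP[_ ca] /andP[_ cb].
    by apply: connect_trans cb; rewrite (sym_connect_sym dsym).
  have Hcl : forall y z, (y \in s) && (index y s < j) -> del_rel e v y z ->
      (z \in s) && (index z s < j).
    move=> y z /andP[ys yj] /andP[eyz /andP[yv zv]].
    have yV : y \in V1 by move: ys; rewrite memS (negbTE yv).
    have zV : z \in V1.
      move: yV; rewrite !memV zv => /andP[_ cy] /=.
      have dyz : del_rel e v y z by rewrite /del_rel /= eyz yv zv.
      exact: (connect_trans cy (connect1 dyz)).
    have zs : z \in s by rewrite memS zV orbT.
    have zj : index z s != j.
      by apply: contraNneq zv => E; rewrite -(nth_index v zs) E /j nth_index.
    rewrite zs /=; rewrite Hadj // in eyz; move: eyz zj yj; apply: arith8.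
  have := @connect_inv T (del_rel e v)
     [pred y | (y \in s) && (index y s < j)] Hcl a b cab.
  by rewrite /= as_ bs ia ib /= => /(_ (arith9 j0)) /arith10.
case/orP: Hend => /eqP Hv.
  exact: (core_not_forced e_sym Gconn us Hadj vs Hv Hk Hout).
have us' : uniq (rev s) by rewrite rev_uniq.
have Hadj' : forall x y, x \in rev s -> y \in rev s ->
  e x y = ((index x (rev s)).+1 == index y (rev s)) || ((index y (rev s)).+1 == index x (rev s)).
  move=> x y; rewrite !mem_rev => xs ys; rewrite Hadj // !index_rev' //.
  have := index_mem x s; have := index_mem y s; rewrite xs ys.
  move: (index x s) (index y s) (size s) => ix iy n H1 H2.
  have E1 : ((n - ix.+1).+1 == n - iy.+1) = (iy.+1 == ix) by apply/eqP/eqP; lia.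
  have E2 : ((n - iy.+1).+1 == n - ix.+1) = (ix.+1 == iy) by apply/eqP/eqP; lia.
  by rewrite E1 E2 orbC.
have vs' : v \in rev s by rewrite mem_rev.
have Hv' : index v (rev s) = 0 by rewrite index_rev' // Hv; lia.
have Hk' : 1 < size (rev s) by rewrite size_rev.
have Hout' a b : a \in rev s -> b \notin rev s -> e a b -> a = v.
  by rewrite !mem_rev; apply: Hout.
exact: (core_not_forced e_sym Gconn us' Hadj' vs' Hv' Hk' Hout').
Qed.

Theorem theorem2 (T : finType) (e : rel T)
  (e_sym : symmetric e) (e_irr : irreflexive e)
  (Gconn : connected_graph e) (v : T) (V1 V2 : {set T})
  (Hcomp : two_components e v V1 V2)
  (Hpath : induced_path e (v |: V1) \/ induced_path e (v |: V2)) :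
  ~ basis_forced e v.
Proof.
case: Hcomp => c1 c2 _ _.
by case: Hpath; apply: one_side.
Qed.
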